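(* Let $G$ be a finite graph and let $v$ be a vertex of $G$ of degree at most five such that there is no $v$-immersion of $K_6$ into $G$. If $G-v$ has a proper $5$-coloring, then so does $G$.
   Context: Graphs are finite and simple. An immersion of $G'$ into $G$ is a function $\alpha$ on $V(G')\cup E(G')$ such that: $\alpha$ restricted to $V(G')$ is an injection into $V(G)$; for each edge $e=uw$ of $G'$, $\alpha(e)$ is a path in $G$ with ends $\alpha(u)$ and $\alpha(w)$; and for distinct edges $e,f$ of $G'$ the paths $\alpha(e),\alpha(f)$ are edge-disjoint. It is essential if moreover $\alpha(e)$ and $\alpha(f)$ are vertex-disjoint whenever $e$ and $f$ are non-adjacent edges. For a vertex $v$ of $G$, a $v$-immersion of $G'$ into $G$ is an essential immersion $\alpha$ of $G'$ into $G$ such that $v=\alpha(u)$ for some vertex $u$ of $G'$ and $\alpha(e)$ is a single-edge path for every edge $e$ of $G'$ incident with $u$. A proper coloring assigns colors to vertices so that adjacent vertices receive distinct colors. *)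

(* Defs.v *)
From mathcomp Require Import all_boot.
Set Implicit Arguments. Unset Strict Implicit. Unset Printing Implicit Defensive.

(* A finite simple graph: vertex type T : finType, adjacency e : rel T,
   assumed symmetric and irreflexive (as hypotheses of the theorem). *)

Definition is_graph_path (T : finType) (e : rel T) (x y : T) (s : seq T) : bool :=
  [&& path e x s, last x s == y & uniq (x :: s)].

(* The edges (as unordered pairs = 2-element sets) traversed by the path x :: s. *)
Definition path_edges (T : finType) (x : T) (s : seq T) : seq {set T} :=
  [seq [set p.1; p.2] | p <- zip (x :: s) s].

Definition edge_disjoint (T : finType) (x : T) (s : seq T) (y : T) (t : seq T) : bool :=
  ~~ has (mem (path_edges x s)) (path_edges y t).

Definition vertex_disjoint (T : finType) (x : T) (s : seq T) (y : T) (t : seq T) : bool :=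
  ~~ has (mem (x :: s)) (y :: t).

(* The vertices of K6 are 'I_6, its edges the
   pairs {i,j} with i < j.  f is the vertex map, P i j encodes the path
   alpha({i,j}) as f i :: P i j (ending at f j), u is the vertex of K6 with
   f u = v. *)
Definition v_immersion_K6 (T : finType) (e : rel T) (v : T) : Prop :=
  exists (f : 'I_6 -> T) (P : 'I_6 -> 'I_6 -> seq T) (u : 'I_6),
    [/\ injective f,
        f u = v /\
        (forall i j : 'I_6, i < j -> is_graph_path e (f i) (f j) (P i j)),
        (forall i j k l : 'I_6, i < j -> k < l -> (i, j) != (k, l) ->
           edge_disjoint (f i) (P i j) (f k) (P k l)),
        (forall i j k l : 'I_6, i < j -> k < l ->
           [&& i != k, i != l, j != k & j != l] ->
           vertex_disjoint (f i) (P i j) (f k) (P k l))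
      &
        (forall i j : 'I_6, i < j -> (i == u) || (j == u) -> size (P i j) = 1)].

Definition proper_coloring (T : finType) (e : rel T) (k : nat) (c : T -> 'I_k) : Prop :=
  forall x y, e x y -> c x != c y.

(* Proper k-colouring of G - v (only vertices other than v are coloured;
   the value at v is irrelevant) *)
Definition proper_coloring_minus (T : finType) (e : rel T) (v : T) (k : nat)
  (c : T -> 'I_k) : Prop :=
  forall x y, x != v -> y != v -> e x y -> c x != c y.

(* Main.v *)
Require Import Defs.
From mathcomp Require Import all_boot zify.
Set Implicit Arguments. Unset Strict Implicit.

Lemma path_good (T : eqType) (r : rel T) (P : pred T) x s :
  (forall a b, r a b -> P b) -> path r x s -> all P s.
Proof.
move=> H; elim: s x => //= y s IH x /andP[rxy ps].
by rewrite (H _ _ rxy) (IH y ps).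
Qed.

Lemma path_edgesP (T : finType) (r : rel T) x s E :
  path r x s -> E \in path_edges x s ->
  exists a b, [/\ E = [set a; b], r a b, a \in x :: s & b \in x :: s].
Proof.
elim: s x => //= y s IH x /andP[rxy ps].
rewrite /path_edges /= inE => /orP[/eqP->|].
  by exists x, y; rewrite !inE !eqxx /= orbT.
move=> /(IH y ps) [a [b [-> rab ha hb]]].
by exists a, b; split => //; rewrite inE ?ha ?hb orbT.
Qed.

Definition sw (i j a : 'I_5) : 'I_5 := if a == i then j else if a == j then i else a.

Lemma swK i j : involutive (sw i j).
Proof.
move=> a; rewrite /sw.
case: (eqVneq a i) => [->|ai].
  by case: (eqVneq j i) => [->|ji]; rewrite ?eqxx // (negbTE ji) eqxx.
case: (eqVneq a j) => [->|aj].
  by rewrite eqxx.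
by rewrite (negbTE ai) (negbTE aj).
Qed.

Definition good (T : finType) (v : T) (c : T -> 'I_5) (i j : nat) (w : T) :=
  (w != v) && ((val (c w) == i) || (val (c w) == j)).
Definition ek (T : finType) (e : rel T) (v : T) (c : T -> 'I_5) (i j : nat) : rel T :=
  fun a b => [&& e a b, good v c i j a & good v c i j b].

Lemma kempe (T : finType) (e : rel T) (v : T) (c : T -> 'I_5) (x : nat -> T) (i j : 'I_5) :
  symmetric e -> irreflexive e -> proper_coloring_minus e v c ->
  (forall w, e v w -> w = x (c w)) ->
  (forall k : 'I_5, e v (x k) /\ c (x k) = k) ->
  i != j ->
  ~~ connect (ek e v c i j) (x i) (x j) ->
  exists d : T -> 'I_5, proper_coloring e d.
Proof.
move=> sym irr hc xuniq xprop ij nconn.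
have xnv : forall k : 'I_5, x k != v.
  move=> k; apply/eqP => h; have := (xprop k).1; by rewrite h irr.
pose C := connect (ek e v c i j) (x i).
have Cgood : forall w, C w -> good v c i j w.
  move=> w /connectP [p pp ->].
  have ap : all (good v c i j) p.
    by apply: (@path_good _ _ _ _ _ _ pp) => a b /and3P[].
  have := mem_last (x i) p; rewrite inE => /orP[/eqP->|hm].
    by rewrite /good xnv (xprop i).2 eqxx.
  exact: (allP ap).
pose c' w := if C w then sw i j (c w) else c w.
pose d w := if w == v then i else c' w.
have mixed : forall a b, a != v -> b != v -> e a b -> C a -> ~~ C b -> c' a != c' b.
  move=> a b av bv eab Ca nCb.
  have ga := Cgood a Ca.
  have gb : ~~ good v c i j b.
    apply/negP => gb; move/negP: nCb; apply.
    apply: (connect_trans Ca); apply: connect1; by rewrite /ek eab ga gb.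
  rewrite /c' Ca (negbTE nCb) /sw.
  move: ga gb; rewrite /good av bv /= negb_or => /orP[] /eqP ha /andP[hb1 hb2].
    have -> : c a == i by apply/eqP/val_inj.
    by apply/eqP => h; move: hb2; rewrite -h eqxx.
  have -> : c a == j by apply/eqP/val_inj.
  case: ifP => _; first by apply/eqP => h; move: hb2; rewrite -h eqxx.
  by apply/eqP => h; move: hb1; rewrite -h eqxx.
have c'prop : forall a b, a != v -> b != v -> e a b -> c' a != c' b.
  move=> a b av bv eab.
  case Ca: (C a); case Cb: (C b).
  - rewrite /c' Ca Cb; apply: contra (hc _ _ av bv eab) => /eqP h.
    by apply/eqP; rewrite -(swK i j (c a)) h swK.
  - by apply: mixed => //; rewrite Cb.
  - rewrite eq_sym; apply: mixed => //; first by rewrite sym.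
    by rewrite Ca.
  - by rewrite /c' Ca Cb; apply: hc.
have nbr : forall w, e v w -> c' w != i.
  move=> w evw; have wv : w != v by apply/eqP => h; move: evw; rewrite h irr.
  rewrite /c'; case Cw: (C w).
  - apply/eqP => h.
    have cwj : c w = j.
      move: h; rewrite /sw; case: eqP => [->|ni]; first by move=> h; move: ij; rewrite h eqxx.
      by case: eqP => // _ h'; case: ni.
    move: nconn; rewrite -/(C (x j)).
    have <- : x (c w) = x j by rewrite cwj.
    by rewrite -(xuniq w evw) Cw.
  - apply/eqP => h.
    move: Cw; rewrite (xuniq w evw) h.
    by rewrite /C connect0.
exists d => a b eab.
rewrite /d; case: (eqVneq a v) => [av|av]; case: (eqVneq b v) => [bv|bv].
- by move: eab; rewrite av bv irr.
- by rewrite eq_sym; apply: nbr; rewrite -av.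
- by apply: nbr; rewrite -bv sym.
- by apply: c'prop.
Qed.

Definition Qv (T : finType) (v : T) (c : T -> 'I_5) (i j : nat) (w : T) :=
  if w == v then j == 5 else (val (c w) == i) || (val (c w) == j).

Lemma comb (T : finType) (e : rel T) (v : T) (c : T -> 'I_5) (i j k l : nat) a b :
  irreflexive e -> proper_coloring_minus e v c -> i < j -> k < l -> e a b ->
  Qv v c i j a -> Qv v c i j b -> Qv v c k l a -> Qv v c k l b -> i = k /\ j = l.
Proof.
move=> irr hc ij kl eab; rewrite /Qv.
have ha : val (c a) < 5 by exact: ltn_ord. have hb : val (c b) < 5 by exact: ltn_ord.
case: (eqVneq a v) => av; case: (eqVneq b v) => bv.
- by move: eab; rewrite av bv irr.
- move=> /eqP j5 h1 /eqP l5 h2; move: h1 h2 => /orP[] /eqP h1 /orP[] /eqP h2; lia.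
- move=> h1 /eqP j5 h2 /eqP l5; move: h1 h2 => /orP[] /eqP h1 /orP[] /eqP h2; lia.
- have := hc a b av bv eab => /eqP hne.
  have hne' : val (c a) <> val (c b) by move=> h; apply: hne; apply: val_inj.
  move=> /orP[] /eqP h1 /orP[] /eqP h2 /orP[] /eqP h3 /orP[] /eqP h4; lia.
Qed.

Theorem lemma2p3 (T : finType) (e : rel T) (v : T) :
  symmetric e -> irreflexive e ->
  #|[set w | e v w]| <= 5 ->
  ~ v_immersion_K6 e v ->
  (exists c : T -> 'I_5, proper_coloring_minus e v c) ->
  exists c : T -> 'I_5, proper_coloring e c.
Proof.
move=> sym irr deg noimm [c hc].
have nvv : forall w, e v w -> w != v.
  by move=> w evw; apply/eqP => h; move: evw; rewrite h irr.
case: (boolP [forall k : 'I_5, exists w, e v w && (c w == k)]) => [hall|hnot]; last first.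
  move/forallPn: hnot => [k /existsPn hk].
  exists (fun w => if w == v then k else c w) => a b eab /=.
  case: (eqVneq a v) => [av|av]; case: (eqVneq b v) => [bv|bv].
  - by move: eab; rewrite av bv irr.
  - by apply: contra (hk b) => /eqP <-; rewrite -av eab eqxx.
  - rewrite eq_sym; apply: contra (hk a) => /eqP <-; by rewrite -bv sym eab eqxx.
  - exact: hc.
pose x (k : nat) := odflt v [pick w | e v w && (val (c w) == k)].
have xprop : forall k : 'I_5, e v (x k) /\ c (x k) = k.
  move=> k; rewrite /x; case: pickP => [w /andP[h1 /eqP h2]|none] /=.
    by split => //; apply: val_inj.
  have [w /andP[h1 h2]] := existsP (forallP hall k).
  by exfalso; have := none w; rewrite h1 /= => /negbT/negP; apply.
clearbody x.
have xprop' : forall k : nat, k < 5 -> e v (x k) /\ val (c (x k)) = k.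
  by move=> k hk; have [h1 h2] := xprop (Ordinal hk); rewrite h2.
have xnv : forall k : nat, k < 5 -> x k != v.
  by move=> k hk; apply: nvv; exact: (xprop' k hk).1.
have xuniq : forall w, e v w -> w = x (c w).
  move=> w evw.
  pose X := [set x (val k) | k : 'I_5].
  have cX : #|X| = 5.
    rewrite card_imset ?card_ord // => k1 k2 h.
    by rewrite -(xprop k1).2 -(xprop k2).2 h.
  have sub : X \subset [set w | e v w].
    by apply/subsetP => y /imsetP [k _ ->]; rewrite inE (xprop k).1.
  have eqc : #|X| = #|[set w | e v w]|.
    by apply/eqP; rewrite eqn_leq subset_leq_card // cX.
  have := (subset_cardP eqc sub) w; rewrite inE evw => /imsetP [k _ ->].
  by rewrite (xprop k).2.
case: (boolP [forall i : 'I_5, forall j : 'I_5,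
         (i != j) ==> connect (ek e v c i j) (x i) (x j)]) => [hconn|hn]; last first.
  move/forallPn: hn => [i /forallPn [j]]; rewrite negb_imply => /andP[ij nc].
  exact: (kempe sym irr hc xuniq xprop ij nc).
exfalso; apply: noimm.
have conn : forall i j : nat, i < 5 -> j < 5 -> i != j ->
    connect (ek e v c i j) (x i) (x j).
  move=> i j hi hj ij.
  by have := implyP (forallP (forallP hconn (Ordinal hi)) (Ordinal hj)); apply.
pose spec (i j : 'I_6) (s : seq T) := (i < j) ==>
  (if nat_of_ord j == 5 then s == [:: v] else
    [&& path (ek e v c i j) (x i) s, last (x i) s == x j & uniq (x i :: s)]).
have exP : forall i j : 'I_6, exists s, spec i j s.
  move=> i j; case: (boolP (i < j)) => ij; last by exists [::]; rewrite /spec (negbTE ij).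
  case: (eqVneq (nat_of_ord j) 5) => j5.
    exists [:: v]; rewrite /spec ij /=; case: eqP => [_|/(_ j5) []]; by [].
  have jl : j < 5 by have := ltn_ord j; lia.
  have := conn i j ltac:(lia) jl ltac:(lia).
  move/connectP => [p pp lp].
  move: lp; case/shortenP: pp => p' pp' up' _ lp.
  exists p'; rewrite /spec ij /=; case: eqP => [h5|_]; first by move: j5; rewrite h5.
  by apply/and3P; split => //; apply/eqP; exact: (esym lp).
pose P i j := xchoose (exP i j).
have Pspec : forall i j, spec i j (P i j) by move=> i j; exact: xchooseP.
clearbody P.
pose f (k : 'I_6) := if nat_of_ord k == 5 then v else x k.
have key : forall i j : 'I_6, i < j ->
   [&& path e (f i) (P i j), last (f i) (P i j) == f j, uniq (f i :: P i j)
     & all (Qv v c i j) (f i :: P i j)].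
  move=> i j ij; have := Pspec i j; rewrite /spec ij /=.
  have hj := ltn_ord j.
  have i5 : i < 5 by lia.
  have fi : f i = x i by rewrite /f; case: eqP => //; lia.
  have [exi cxi] := xprop' i i5.
  have Qxi : Qv v c i j (x i) by rewrite /Qv (negbTE (xnv i i5)) cxi eqxx.
  rewrite fi /f; case: eqP => j5.
    move/eqP => -> /=; rewrite sym exi mem_seq1 (negbTE (xnv i i5)) Qxi /Qv eqxx /=.
    by rewrite andbT; apply/eqP.
  move/and3P => [pp /eqP lp up]; rewrite lp eqxx up Qxi /=.
  rewrite (sub_path _ pp) /=; last by move=> a b /and3P[].
  apply: (@path_good _ _ _ _ _ _ pp) => a b /and3P[_ _ /andP[bv hb]].
  by rewrite /Qv (negbTE bv).
exists f, P, ord_max; split.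
- move=> a b; rewrite /f.
  have ha := ltn_ord a; have hb := ltn_ord b.
  case: eqP => a5; case: eqP => b5.
  + by move=> _; apply: ord_inj; rewrite a5 b5.
  + by move=> h; have := xnv b ltac:(lia); rewrite -h eqxx.
  + by move=> h; have := xnv a ltac:(lia); rewrite h eqxx.
  + move=> h; apply: ord_inj.
    by rewrite -(xprop' a ltac:(lia)).2 -(xprop' b ltac:(lia)).2 h.
- split; first by rewrite /f.
  move=> i j ij; have /and4P[h1 h2 h3 _] := key i j ij.
  by rewrite /is_graph_path h1 h2 h3.
- move=> i j k l ij kl neq.
  have /and4P[p1 _ _ q1] := key i j ij.
  have /and4P[p2 _ _ q2] := key k l kl.
  apply/hasPn => E hE; apply/negP => hE'.
  have [a [b [Eab eab ha hb]]] := @path_edgesP _ _ _ _ _ p1 hE'.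
  have [a' [b' [Eab' _ ha' hb']]] := @path_edgesP _ _ _ _ _ p2 hE.
  have qa := allP q1 a ha; have qb := allP q1 b hb.
  have qa' := allP q2 a' ha'; have qb' := allP q2 b' hb'.
  have inE' : forall y, y \in E -> Qv v c k l y.
    by move=> y; rewrite Eab' => /set2P[] ->.
  have qka : Qv v c k l a by apply: inE'; rewrite Eab set21.
  have qkb : Qv v c k l b by apply: inE'; rewrite Eab set22.
  have [hik hjl] := comb irr hc ij kl eab qa qb qka qkb.
  move: neq; have -> : i = k by apply: ord_inj.
  have -> : j = l by apply: ord_inj.
  by rewrite eqxx.
- move=> i j k l ij kl dist.
  have /and4P[_ _ _ q1] := key i j ij.
  have /and4P[_ _ _ q2] := key k l kl.
  apply/hasPn => w hw; apply/negP => hw'.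
  have := allP q1 w hw'; have := allP q2 w hw; rewrite /Qv.
  move: dist => /and4P[d1 d2 d3 d4].
  have hcw : val (c w) < 5 by exact: ltn_ord.
  case: (w == v).
    move=> /eqP h1 /eqP h2; move: d4; rewrite -!val_eqE /=; lia.
  move: d1 d2 d3 d4; rewrite -!val_eqE /=.
  move=> d1 d2 d3 d4 /orP[] /eqP h1 /orP[] /eqP h2; lia.
- move=> i j ij hu.
  have hj := ltn_ord j.
  have j5 : nat_of_ord j == 5.
    move: hu; rewrite -!val_eqE /=; lia.
  by have := Pspec i j; rewrite /spec ij j5 => /eqP ->.
Qed.
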